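(* Let $\gamma,h>0$, $z,\tilde z\in\mathbb{R}^{2d}$, $n\ge1$, write $\Delta z=\tilde z-z=(\Delta x,\Delta v)$, and let $y_k=(u_k,w_k)$, $k\in\{0,\dots,n\}$, be the optimized trajectory. Then for all $k\in\{0,\dots,n\}$, \[ |u_k|\le|\Delta x|+\frac{he^{-\gamma h/2}}{1-e^{-\gamma h}}(1-e^{-\gamma hn})|\Delta v|\le 2\left(1+\frac{hn}{2+\gamma hn}\right)|\Delta z|. \]
   Context: Let $A_h=\begin{pmatrix} I_d & he^{-\gamma h/2}I_d\\ 0 & e^{-\gamma h}I_d\end{pmatrix}$, $L_h=(1-e^{-\gamma h})^{1/2}\begin{pmatrix} hI_d & 0\\ e^{-\gamma h/2}I_d & I_d\end{pmatrix}$, $\Sigma_{h,n}=\sum_{k=1}^n A_h^{n-k}L_hL_h^T(A_h^T)^{n-k}$, $\Delta z=\tilde z-z$, and $E_k=L_h^T(A_h^T)^{n-k}\Sigma_{h,n}^{-1}A_h^n\Delta z$ for $k=1,\dots,n$. The optimized trajectory is $y_0=\Delta z$, $y_{k+1}=A_hy_k-L_hE_{k+1}$ for $k=0,\dots,n-1$, with $y_k=(u_k,w_k)\in\mathbb{R}^d\times\mathbb{R}^d$ (position and velocity components). *)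

(* Defs.v *)
From HB Require Import structures.
From mathcomp Require Import all_boot all_order all_algebra.
From mathcomp Require Import all_classical all_reals all_analysis.
Set Implicit Arguments. Unset Strict Implicit. Unset Printing Implicit Defensive.
Import Order.TTheory GRing.Theory Num.Theory.
Local Open Scope ring_scope.

Section Defs.
Variables (R : realType) (d : nat) (gamma h : R).

Definition vnorm m (v : 'cV[R]_m) : R := Num.sqrt (\sum_i (v i 0) ^+ 2).

(* matrix power A^k (the block dimension d+d is not syntactically a successor) *)
Definition mxpow m (A : 'M[R]_m) (k : nat) : 'M[R]_m := iter k (mulmx A) 1%:M.

Definition Ah : 'M[R]_(d + d) :=
  block_mx 1%:M ((h * expR (- gamma * h / 2))%:M)
           0 ((expR (- gamma * h))%:M).

Definition Lh : 'M[R]_(d + d) :=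
  Num.sqrt (1 - expR (- gamma * h)) *:
  block_mx (h%:M) 0 ((expR (- gamma * h / 2))%:M) 1%:M.

Definition Sigma (n : nat) : 'M[R]_(d + d) :=
  \sum_(1 <= k < n.+1)
     mxpow Ah (n - k) *m Lh *m Lh^T *m mxpow Ah^T (n - k).

Definition Ek (n : nat) (Dz : 'cV[R]_(d + d)) (k : nat) : 'cV[R]_(d + d) :=
  Lh^T *m mxpow Ah^T (n - k) *m invmx (Sigma n) *m mxpow Ah n *m Dz.

Fixpoint traj (n : nat) (Dz : 'cV[R]_(d + d)) (k : nat) : 'cV[R]_(d + d) :=
  match k with
  | 0 => Dz
  | k'.+1 => Ah *m traj n Dz k' - Lh *m Ek n Dz k'.+1
  end.

Definition upos (y : 'cV[R]_(d + d)) : 'cV[R]_d := usubmx y.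
Definition wvel (y : 'cV[R]_(d + d)) : 'cV[R]_d := dsubmx y.

End Defs.

(* Main.v *)
Require Import Defs.
From HB Require Import structures.
From mathcomp Require Import all_boot all_order all_algebra.
From mathcomp Require Import all_classical all_reals all_analysis.
From mathcomp Require Import ring lra.
Import Order.TTheory GRing.Theory Num.Theory.
Local Open Scope ring_scope.

Section Blk.
Variables (R : realType) (d : nat).
Definition blk (p q r s : R) : 'M[R]_(d + d) := block_mx p%:M q%:M r%:M s%:M.

Lemma blk_mul p q r s p' q' r' s' :
  blk p q r s *m blk p' q' r' s' =
  blk (p * p' + q * r') (p * q' + q * s') (r * p' + s * r') (r * q' + s * s').
Proof. by rewrite /blk mulmx_block -!scalar_mxM -!raddfD. Qed.

Lemma blk_tr p q r s : (blk p q r s)^T = blk p r q s.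
Proof. by rewrite /blk tr_block_mx !tr_scalar_mx. Qed.

Lemma blk_add p q r s p' q' r' s' :
  blk p q r s + blk p' q' r' s' = blk (p+p') (q+q') (r+r') (s+s').
Proof. by rewrite /blk add_block_mx -!raddfD. Qed.

Lemma blk_opp p q r s : - blk p q r s = blk (-p) (-q) (-r) (-s).
Proof. by rewrite /blk opp_block_mx -!raddfN. Qed.

Lemma blk_sub p q r s p' q' r' s' :
  blk p q r s - blk p' q' r' s' = blk (p-p') (q-q') (r-r') (s-s').
Proof. by rewrite blk_opp blk_add. Qed.

Lemma blk1 : 1%:M = blk 1 0 0 1.
Proof. by rewrite /blk (raddf0 (@scalar_mx R d)) -scalar_mx_block. Qed.

Lemma blk0 : 0 = blk 0 0 0 0.
Proof. by rewrite /blk !raddf0 block_mx0. Qed.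

Lemma blk_eq p q r s p' q' r' s' :
  p = p' -> q = q' -> r = r' -> s = s' -> blk p q r s = blk p' q' r' s'.
Proof. by move=> -> -> -> ->. Qed.

Lemma blk_upos p q r s (v : 'cV[R]_(d + d)) :
  usubmx (blk p q r s *m v) = p *: usubmx v + q *: dsubmx v.
Proof.
by rewrite -{1}(vsubmxK v) /blk mul_block_col col_mxKu !mul_scalar_mx.
Qed.
End Blk.
Arguments blk {R} d.

Section Ineq.
Variable R : realFieldType.

Lemma G_ineq (b : R) m : 0 < b -> b < 1 -> m%:R * (1 - b) * b ^+ m <= 1 - b ^+ m.
Proof.
move=> b0 b1; elim: m => [|m IH]; first by rewrite mul0r mul0r expr0 subrr.
have p0 : 0 <= b ^+ m by rewrite exprn_ge0 // ltW.
rewrite exprS -natr1.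
have : 0 <= (m%:R + 1) * b ^+ m * (1 - b) ^+ 2.
  by rewrite mulr_ge0 ?sqr_ge0 // mulr_ge0 // addr_ge0 ?ler0n.
nra.
Qed.

Definition KF (b : R) (m : nat) := m%:R * (1 - b ^+ 2) * (1 + b ^+ m) - 4 * b * (1 - b ^+ m).

Lemma K_step (b : R) m : 0 < b -> b < 1 ->
  KF b m + (1 - b) ^+ 3 * b ^+ m <= KF b m.+1.
Proof.
move=> b0 b1; rewrite /KF.
have G := G_ineq b m b0 b1.
have p0 : 0 <= b ^+ m by rewrite exprn_ge0 // ltW.
have hb : 0 <= (1 - b) * (1 + b) by rewrite mulr_ge0 //; lra.
have := ler_wpM2l hb G.
rewrite (exprS b m) -natr1; nra.
Qed.

Lemma K_ineq (b : R) m : 0 < b -> b < 1 -> (0 < m)%N ->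
  4 * b * (1 - b ^+ m) < m%:R * (1 - b ^+ 2) * (1 + b ^+ m).
Proof.
move=> b0 b1; elim: m => [//|m IH] _.
have S := K_step b m b0 b1; rewrite /KF in S.
have p0 : 0 < (1 - b) ^+ 3 * b ^+ m by rewrite mulr_gt0 ?exprn_gt0 // subr_gt0.
case: m IH S p0 => [|m] IH S p0.
  rewrite expr0 expr1 in S p0 *; rewrite mul0r mul0r subrr add0r in S; lra.
have := IH isT; lra.
Qed.

Lemma K_ineq' (b : R) m : 0 < b -> b < 1 ->
  4 * b * (1 - b ^+ m) <= m%:R * (1 - b ^+ 2) * (1 + b ^+ m).
Proof.
move=> b0 b1; case: m => [|m]; first by rewrite expr0 subrr !mulr0 mul0r mul0r.
exact/ltW/K_ineq.
Qed.


Lemma bound_p (x y rj rk : R) : 0 < x -> x <= 1 -> 0 < y -> y <= 1 ->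
  4 * (1 - y) <= rj * (1 + y) -> 4 * (1 - x) <= rk * (1 + x) ->
  0 < (rk + rj) * (1 + x * y) - 4 * (1 - x * y) ->
  `|(rj * (1 + x * y) - 4 * (1 - x * y) + 2 * (1 - x) * (1 + y)) /
    ((rk + rj) * (1 + x * y) - 4 * (1 - x * y))| <= 1.
Proof.
move=> x0 x1 y0 y1 hj hk hD.
set num := rj * _ - _ + _; set D := (rk + rj) * _ - _.
have E1 : (1 + y) * num = (1 + x * y) * (rj * (1 + y) - 4 * (1 - y)) + 2 * (1 - x) * (1 - y) ^+ 2.
  by rewrite /num; ring.
have E2 : (1 + x) * (D - num) = (1 + x * y) * (rk * (1 + x) - 4 * (1 - x)) + 2 * (1 - x) ^+ 2 * (1 - y).
  by rewrite /num /D; ring.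
have xy0 : 0 <= x * y by rewrite mulr_ge0 // ltW.
have n0 : 0 <= num.
  have : 0 <= (1 + y) * num.
    by rewrite E1 addr_ge0 // ?mulr_ge0 ?sqr_ge0 // ?subr_ge0 //; lra.
  rewrite pmulr_rge0 //; lra.
have n1 : num <= D.
  have : 0 <= (1 + x) * (D - num).
    by rewrite E2 addr_ge0 // ?mulr_ge0 ?sqr_ge0 // ?subr_ge0 //; lra.
  rewrite pmulr_rge0 ?subr_ge0 //; lra.
rewrite ger0_norm; last by rewrite divr_ge0 // ltW.
by rewrite ler_pdivrMr // mul1r.
Qed.

Lemma bound_q (x y rj rk : R) : 0 < x -> x <= 1 -> 0 < y -> y <= 1 ->
  4 * (1 - y) <= rj * (1 + y) -> 4 * (1 - x) <= rk * (1 + x) ->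
  `|rj * (1 - x) * (1 - x * y * y) - rk * x * (1 - y) ^+ 2 - 2 * (1 - x * y) * (1 - x) * (1 - y)|
   <= (1 - x * y) ^+ 2 * ((rk + rj) * (1 + x * y) - 4 * (1 - x * y)).
Proof.
move=> x0 x1 y0 y1 hj hk.
set X := _ - _ - _; set Z := _ * _.
have xy1 : x * y <= 1 by rewrite mulr_ile1 // ltW.
have xy0 : 0 <= x * y by rewrite mulr_ge0 // ltW.
have ux : 0 <= 1 - x by rewrite subr_ge0.
have uy : 0 <= 1 - y by rewrite subr_ge0.
have uxy : 0 <= 1 - x * y by rewrite subr_ge0.
have Ej : 0 <= rj * (1 + y) - 4 * (1 - y) by rewrite subr_ge0.
have Ek : 0 <= rk * (1 + x) - 4 * (1 - x) by rewrite subr_ge0.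
have xyy1 : 0 <= 1 - x * y * y by rewrite subr_ge0 mulr_ile1 // ?mulr_ge0 // ltW.
have ajm : 0 <= (1 - x * y) ^+ 2 * (1 + x * y) - (1 - x) * (1 - x * y * y).
  have -> : (1 - x * y) ^+ 2 * (1 + x * y) - (1 - x) * (1 - x * y * y) =
    x * ((1 - y) ^+ 2 * (1 + y) + y ^+ 2 * (1 - x) * ((1 - y) + (1 - x * y))) by ring.
  apply: mulr_ge0; first exact: ltW.
  apply: addr_ge0; first by apply: mulr_ge0; [exact: sqr_ge0|lra].
  apply: mulr_ge0; [apply: mulr_ge0 => //; exact: sqr_ge0|lra].
have akm : 0 <= (1 - x * y) ^+ 2 * (1 + x * y) + x * (1 - y) ^+ 2.
  apply: addr_ge0; first by apply: mulr_ge0; [exact: sqr_ge0|lra].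
  apply: mulr_ge0; [exact: ltW|exact: sqr_ge0].
have ajp : 0 <= (1 - x * y) ^+ 2 * (1 + x * y) + (1 - x) * (1 - x * y * y).
  apply: addr_ge0; first by apply: mulr_ge0; [exact: sqr_ge0|lra].
  exact: mulr_ge0.
have akp : 0 <= (1 - x * y) ^+ 2 * (1 + x * y) - x * (1 - y) ^+ 2.
  have -> : (1 - x * y) ^+ 2 * (1 + x * y) - x * (1 - y) ^+ 2 =
    (1 - x) * (1 - x * y * y) + x * y * (1 - x * y) ^+ 2 by ring.
  apply: addr_ge0; first exact: mulr_ge0.
  apply: mulr_ge0 => //; exact: sqr_ge0.
have sq : (1 - x) * (1 - y) <= (1 - x * y) ^+ 2.
  rewrite expr2; apply: ler_pM => //; nra.
have Em : (1 + x) * (1 + y) * (Z - X) =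
  (1 + x) * ((1 - x * y) ^+ 2 * (1 + x * y) - (1 - x) * (1 - x * y * y)) * (rj * (1 + y) - 4 * (1 - y))
  + (1 + y) * ((1 - x * y) ^+ 2 * (1 + x * y) + x * (1 - y) ^+ 2) * (rk * (1 + x) - 4 * (1 - x))
  + (1 - x) * (1 - y) * (1 - x * y) * (4 * (1 - x * y) ^+ 2 - 2 * ((1 - x) * (1 - y))).
  by rewrite /Z /X; ring.
have Ep : (1 + x) * (1 + y) * (Z + X) =
  (1 + x) * ((1 - x * y) ^+ 2 * (1 + x * y) + (1 - x) * (1 - x * y * y)) * (rj * (1 + y) - 4 * (1 - y))
  + (1 + y) * ((1 - x * y) ^+ 2 * (1 + x * y) - x * (1 - y) ^+ 2) * (rk * (1 + x) - 4 * (1 - x))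
  + (1 - x) * (1 - y) * (4 * (1 - x * y) ^+ 3 + 2 * (1 - x) * (1 - y) * (1 - x * y)).
  by rewrite /Z /X; ring.
have pxy : 0 < (1 + x) * (1 + y) by rewrite mulr_gt0 //; lra.
have h1 : 0 <= Z - X.
  have : 0 <= (1 + x) * (1 + y) * (Z - X).
    rewrite Em; apply: addr_ge0; first apply: addr_ge0.
    - apply: mulr_ge0 => //; apply: mulr_ge0 => //; lra.
    - apply: mulr_ge0 => //; apply: mulr_ge0 => //; lra.
    - apply: mulr_ge0; first by do 2 apply: mulr_ge0 => //.
      have := mulr_ge0 ux uy; lra.
  by rewrite pmulr_rge0.
have h2 : 0 <= Z + X.
  have : 0 <= (1 + x) * (1 + y) * (Z + X).
    rewrite Ep; apply: addr_ge0; first apply: addr_ge0.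
    - apply: mulr_ge0 => //; apply: mulr_ge0 => //; lra.
    - apply: mulr_ge0 => //; apply: mulr_ge0 => //; lra.
    - apply: mulr_ge0; first exact: mulr_ge0.
      apply: addr_ge0; first by apply: mulr_ge0 => //; exact: exprn_ge0.
      by rewrite !mulr_ge0.
  by rewrite pmulr_rge0.
rewrite ler_norml; lra.
Qed.

End Ineq.

Section Exp.
Import numFieldNormedType.Exports.
Local Open Scope classical_set_scope.
Variable R : realType.

Lemma mono_deriv (f df : R -> R) (s : R) : 0 <= s ->
  (forall x : R, is_derive x (1 : R) f (df x)) -> (forall x, 0 <= x -> 0 <= df x) -> f 0 <= f s.
Proof.
move=> s0 hd hpos.
have cf : {within `[0, s], continuous f}.
  apply: continuous_subspaceT => x.
  apply: differentiable_continuous; apply/derivable1_diffP.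
  by have := hd x; case.
have [c cin E] := MVT_segment s0 (fun x _ => hd x) cf.
rewrite -subr_ge0 E mulr_ge0 ?subr0 // hpos //.
by move: cin; rewrite in_itv /= => /andP[].
Qed.


Lemma exp_ineq1 (s : R) : 0 <= s -> 2 * s * expR s <= expR s * expR s - 1.
Proof.
move=> s0.
pose f := (expR * expR - cst 1 - ( *%R 2) * expR : R -> R).
pose df := (fun x : R => 2 * expR x * (expR x - 1 - x)).
have hd : forall x : R, is_derive x (1 : R) f (df x).
  move=> x; apply: is_derive_eq.
  rewrite /df /=. rewrite -![_ *: _]/(_ * _). ring.
have hp : forall x, 0 <= x -> 0 <= df x.
  move=> x _; rewrite /df; apply: mulr_ge0; first by rewrite mulr_ge0 ?expR_ge0.
  have := expR_ge1Dx x; lra.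
have := @mono_deriv f df s s0 hd hp.
have E : forall y, f y = expR y * expR y - 1 - 2 * y * expR y by [].
rewrite !E expR0 !mulr0 mul1r; lra.
Qed.


Lemma exp_ineq2 (s : R) : 0 <= s -> (2 - s) * expR s <= 2 + s.
Proof.
move=> s0.
pose f := (cst 2 + id - (cst 2 - id) * expR : R -> R).
pose df := (fun x : R => 1 - (1 - x) * expR x).
have hd : forall x : R, is_derive x (1 : R) f (df x).
  move=> x; apply: is_derive_eq.
  rewrite /df /=. rewrite -![_ *: _]/(_ * _).
  have -> : (cst 2 - id) x = 2 - x :> R by []. ring.
have hp : forall x, 0 <= x -> 0 <= df x.
  move=> x _; rewrite /df subr_ge0.
  have := expR_ge1Dx (- x); rewrite expRN => H.
  have ex := expR_gt0 x.
  have : (1 - x) * expR x <= (expR x)^-1 * expR x by rewrite ler_pM2r //; lra.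
  by rewrite mulVf ?gt_eqF.
have := @mono_deriv f df s s0 hd hp.
have E : forall y, f y = 2 + y - (2 - y) * expR y by [].
rewrite !E expR0; lra.
Qed.

End Exp.

Set Implicit Arguments. Unset Strict Implicit.
Section Norm.
Variable R : realType.

Lemma sumsq_ge0 m (u : 'cV[R]_m) : 0 <= \sum_i (u i 0) ^+ 2.
Proof. by apply: sumr_ge0 => i _; exact: sqr_ge0. Qed.

Lemma vnorm_ge0 m (u : 'cV[R]_m) : 0 <= vnorm u.
Proof. exact: sqrtr_ge0. Qed.

Lemma vnorm_sq m (u : 'cV[R]_m) : vnorm u ^+ 2 = \sum_i (u i 0) ^+ 2.
Proof. by rewrite /vnorm sqr_sqrtr // sumsq_ge0. Qed.

Lemma vnorm_scale m (p : R) (u : 'cV[R]_m) : vnorm (p *: u) = `|p| * vnorm u.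
Proof.
rewrite /vnorm -sqrtr_sqr -sqrtrM ?sqr_ge0 //; congr Num.sqrt.
by rewrite mulr_sumr; apply: eq_bigr => i _; rewrite mxE exprMn.
Qed.

Lemma sum0_entries m (u : 'cV[R]_m) : \sum_i (u i 0) ^+ 2 = 0 -> forall i, u i 0 = 0.
Proof.
move=> H i; have /psumr_eq0P P := H.
have := P (fun j _ => sqr_ge0 _) i isT.
by move/eqP; rewrite sqrf_eq0 => /eqP.
Qed.

Lemma cs m (u w : 'cV[R]_m) : \sum_i u i 0 * w i 0 <= vnorm u * vnorm w.
Proof.
set al := vnorm u; set be := vnorm w.
have a0 : 0 <= al := vnorm_ge0 u. have b0 : 0 <= be := vnorm_ge0 w.
have Q : 0 <= \sum_i (be * u i 0 - al * w i 0) ^+ 2 by apply: sumr_ge0 => i _; exact: sqr_ge0.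
have E : \sum_i (be * u i 0 - al * w i 0) ^+ 2 =
   be ^+ 2 * (\sum_i (u i 0) ^+ 2) - 2 * (al * be) * \sum_i u i 0 * w i 0 + al ^+ 2 * (\sum_i (w i 0) ^+ 2).
  rewrite !mulr_sumr -sumrB -big_split /=.
  by apply: eq_bigr => i _; ring.
rewrite -!vnorm_sq -/al -/be in E.
have [ab0|abp] := eqVneq (al * be) 0.
  move: ab0 => /eqP; rewrite mulf_eq0 => /orP[] /eqP z.
    have : \sum_i (u i 0) ^+ 2 = 0 by rewrite -vnorm_sq -/al z expr0n.
    move/sum0_entries => Z; rewrite big1 ?z ?mul0r // => i _; by rewrite Z mul0r.
  have : \sum_i (w i 0) ^+ 2 = 0 by rewrite -vnorm_sq -/be z expr0n.
  move/sum0_entries => Z; rewrite big1 ?z ?mulr0 // => i _; by rewrite Z mulr0.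
have abpos : 0 < al * be by rewrite lt_def abp mulr_ge0.
rewrite E in Q.
set S := \sum_i _ in Q *.
have : (al * be) * S <= (al * be) * (al * be) by nra.
by rewrite ler_pM2l.
Qed.

Lemma vnorm_triangle m (u w : 'cV[R]_m) : vnorm (u + w) <= vnorm u + vnorm w.
Proof.
have a0 := vnorm_ge0 u; have b0 := vnorm_ge0 w.
rewrite -(ler_pXn2r (n:=2)) // ?nnegrE ?addr_ge0 ?vnorm_ge0 //.
rewrite vnorm_sq.
have C := cs u w.
have -> : \sum_i ((u + w) i 0) ^+ 2 =
  \sum_i (u i 0) ^+ 2 + 2 * \sum_i u i 0 * w i 0 + \sum_i (w i 0) ^+ 2.
  rewrite mulr_sumr -!big_split /=; apply: eq_bigr => i _; rewrite mxE; ring.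
rewrite -!vnorm_sq; nra.
Qed.

Lemma vnorm_usub d (v : 'cV[R]_(d + d)) : vnorm (upos v) <= vnorm v.
Proof.
rewrite /vnorm ler_sqrt ?sumsq_ge0 // big_split_ord /=.
rewrite -[X in X <= _]addr0; apply: lerD; last by apply: sumr_ge0 => i _; exact: sqr_ge0.
by apply: ler_sum => i _; rewrite /upos mxE.
Qed.

Lemma vnorm_dsub d (v : 'cV[R]_(d + d)) : vnorm (wvel v) <= vnorm v.
Proof.
rewrite /vnorm ler_sqrt ?sumsq_ge0 // big_split_ord /=.
rewrite -[X in X <= _]add0r; apply: lerD; first by apply: sumr_ge0 => i _; exact: sqr_ge0.
by apply: ler_sum => i _; rewrite /wvel mxE.
Qed.

End Norm.
Unset Implicit Arguments.

Section Main.
Variables (R : realType) (d : nat) (gamma h : R).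
Hypotheses (hg : 0 < gamma) (hh : 0 < h).

Let a : R := expR (- gamma * h / 2).
Let c : R := Num.sqrt (1 - a ^+ 2).
Local Notation b := (a ^+ 2).
Let kap : R := h * a / (1 - b).
Let PP : R := h ^+ 2 * (1 + b) / (1 - b).

Lemma a_gt0 : 0 < a. Proof. exact: expR_gt0. Qed.
Lemma eb : expR (- gamma * h) = b.
Proof. by rewrite /a expr2 -expRD; congr expR; field. Qed.
Lemma b_lt1 : b < 1.
Proof. by rewrite -eb expR_lt1 mulNr oppr_lt0 mulr_gt0. Qed.
Lemma b_gt0 : 0 < b. Proof. by rewrite exprn_gt0 // a_gt0. Qed.
Lemma c2 : c ^+ 2 = 1 - b.
Proof. by rewrite /c sqr_sqrtr // subr_ge0 ltW // b_lt1. Qed.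
Lemma c_gt0 : 0 < c.
Proof. by rewrite /c sqrtr_gt0 subr_gt0 b_lt1. Qed.
Lemma omb_neq0 : 1 - b != 0.
Proof. by rewrite subr_eq0 eq_sym lt_eqF // b_lt1. Qed.
Lemma a_neq0 : a != 0. Proof. by rewrite gt_eqF // a_gt0. Qed.
Lemma c_neq0 : c != 0. Proof. by rewrite gt_eqF // c_gt0. Qed.
Lemma h_neq0 : h != 0. Proof. by rewrite gt_eqF. Qed.

Ltac fld := field; rewrite ?omb_neq0 ?a_neq0 ?c_neq0 ?h_neq0 ?andbT //.

Local Notation A := (Ah d gamma h).
Local Notation L := (Lh d gamma h).

Lemma A_blk : A = blk d 1 (h * a) 0 b.
Proof.
rewrite /Ah /blk eb (raddf0 (@scalar_mx R d)).
by congr block_mx; congr scalar_mx; rewrite /a; congr (_ * expR _); field.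
Qed.

Lemma L_blk : L = blk d (c * h) 0 (c * a) c.
Proof.
rewrite /Lh /blk eb -/c scale_block_mx !scale_scalar_mx scaler0 mulr1.
by rewrite (raddf0 (@scalar_mx R d)).
Qed.

Lemma mxpowA m : mxpow A m = blk d 1 (kap * (1 - b ^+ m)) 0 (b ^+ m).
Proof.
elim: m => [|m IH]; first by rewrite /mxpow /= blk1; apply: blk_eq; rewrite ?expr0 ?subrr ?mulr0.
rewrite /mxpow /= -/(mxpow _ _) IH A_blk blk_mul; apply: blk_eq; rewrite ?exprS /kap.
all: fld.
Qed.

Lemma mxpowAT m : mxpow A^T m = blk d 1 0 (kap * (1 - b ^+ m)) (b ^+ m).
Proof.
elim: m => [|m IH]; first by rewrite /mxpow /= blk1; apply: blk_eq; rewrite ?expr0 ?subrr ?mulr0.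
rewrite /mxpow /= -/(mxpow _ _) IH A_blk blk_tr blk_mul; apply: blk_eq; rewrite ?exprS /kap;
  fld.
Qed.


Lemma LLt : L *m L^T = blk d ((1 - b) * h ^+ 2) ((1 - b) * h * a) ((1 - b) * h * a) ((1 - b) * (1 + b)).
Proof. by rewrite L_blk blk_tr blk_mul; apply: blk_eq; rewrite -c2; ring. Qed.

Definition s11 (k : nat) := k%:R * PP - kap ^+ 2 * (1 - b ^+ k) * (3 - b ^+ k).
Definition s12 (k : nat) := kap * (1 - b ^+ k) ^+ 2.
Definition s22 (k : nat) := 1 - (b ^+ k) ^+ 2.

Lemma SigmaS k : Sigma d gamma h k.+1 =
  mxpow A k *m L *m L^T *m mxpow A^T k + Sigma d gamma h k.
Proof.
rewrite /Sigma big_nat_recl // subn1 /=; congr (_ + _).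
Qed.

Lemma Sigma_blk k : Sigma d gamma h k = blk d (s11 k) (s12 k) (s12 k) (s22 k).
Proof.
elim: k => [|k IH].
  rewrite /Sigma big_geq // blk0; apply: blk_eq; rewrite /s11 /s12 /s22 expr0 ?subrr; try ring.
rewrite SigmaS IH mxpowA mxpowAT -!mulmxA (mulmxA L) LLt !blk_mul blk_add.
apply: blk_eq; rewrite /s11 /s12 /s22 /kap /PP ?exprS ?natrS; fld.
Qed.


Lemma SigmaS' k : Sigma d gamma h k.+1 = A *m Sigma d gamma h k *m A^T + L *m L^T.
Proof.
rewrite !Sigma_blk A_blk LLt blk_tr !blk_mul blk_add.
apply: blk_eq; rewrite /s11 /s12 /s22 /kap /PP ?exprS ?natrS; fld.
Qed.

Lemma traj_formula n (Dz : 'cV[R]_(d + d)) k : (k <= n)%N ->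
  traj gamma h n Dz k = mxpow A k *m Dz -
    Sigma d gamma h k *m mxpow A^T (n - k) *m
      (invmx (Sigma d gamma h n) *m mxpow A n *m Dz).
Proof.
elim: k => [|k IH] hk.
  by rewrite /= /Sigma big_geq // !mul0mx subr0 /mxpow /= mul1mx.
rewrite /= IH ?(ltnW hk) // /Ek.
have -> : (n - k = (n - k.+1).+1)%N by rewrite subnSK.
rewrite SigmaS' /mxpow /= -!/(mxpow _ _).
set W := invmx _ *m _ *m Dz.
set P := mxpow _ (n - k.+1).
by rewrite mulmxBr !mulmxA !mulmxDl opprD addrA.
Qed.


Let rho : R := (1 - b ^+ 2) / b.
Definition Dl (n : nat) := n%:R * rho * (1 + b ^+ n) - 4 * (1 - b ^+ n).
Definition dt (n : nat) := s11 n * s22 n - s12 n ^+ 2.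

Lemma dt_eq n : dt n = kap ^+ 2 * (1 - b ^+ n) * Dl n.
Proof. rewrite /dt /s11 /s12 /s22 /Dl /kap /PP /rho; fld. Qed.

Definition Sinv n := blk d (s22 n / dt n) (- s12 n / dt n) (- s12 n / dt n) (s11 n / dt n).

Lemma invSigma n : dt n != 0 -> invmx (Sigma d gamma h n) = Sinv n.
Proof.
move=> hdt.
have H : Sigma d gamma h n *m Sinv n = 1%:M.
  rewrite Sigma_blk /Sinv blk_mul blk1; apply: blk_eq; rewrite /dt in hdt *; field => //.
have [U _] := mulmx1_unit H.
by rewrite -[RHS]mul1mx -(mulVmx U) -mulmxA H mulmx1.
Qed.


Definition pco (k j : nat) :=
  let x := b ^+ k in let y := b ^+ j in
  (j%:R * rho * (1 + x * y) - 4 * (1 - x * y) + 2 * (1 - x) * (1 + y)) /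
  ((k%:R + j%:R) * rho * (1 + x * y) - 4 * (1 - x * y)).
Definition Xq (k j : nat) :=
  let x := b ^+ k in let y := b ^+ j in
  rho * (j%:R * (1 - x) * (1 - x * y * y) - k%:R * x * (1 - y) ^+ 2)
   - 2 * (1 - x * y) * (1 - x) * (1 - y).
Definition qco (k j : nat) :=
  let x := b ^+ k in let y := b ^+ j in
  kap * Xq k j / ((1 - x * y) * ((k%:R + j%:R) * rho * (1 + x * y) - 4 * (1 - x * y))).

Lemma Dl_form K X : K * rho * (1 + X) - 4 * (1 - X) != 0 ->
  K * (1 - b ^+ 2) * (1 + X) + - (4 * (1 - X)) * b != 0.
Proof.
move=> H; have -> : K * (1 - b ^+ 2) * (1 + X) + - (4 * (1 - X)) * b =
  b * (K * rho * (1 + X) - 4 * (1 - X)) by rewrite /rho; fld.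
by rewrite mulf_neq0 // expf_neq0 // a_neq0.
Qed.

Lemma upos_traj n (Dz : 'cV[R]_(d + d)) k : (k <= n)%N ->
  1 - b ^+ n != 0 -> Dl n != 0 ->
  upos (traj gamma h n Dz k) = pco k (n - k) *: upos Dz + qco k (n - k) *: wvel Dz.
Proof.
move=> hk h1 h2.
have kap0 : kap != 0.
  by rewrite /kap; apply: mulf_neq0; [apply: mulf_neq0; [exact: h_neq0|exact: a_neq0]|rewrite invr_eq0; exact: omb_neq0].
have hdt : dt n != 0.
  by rewrite dt_eq; apply: mulf_neq0 => //; apply: mulf_neq0 => //; exact: expf_neq0.
rewrite traj_formula // invSigma // !mxpowA mxpowAT !Sigma_blk /Sinv !mulmxA -mulmxBl.
rewrite !blk_mul blk_sub /upos /wvel blk_upos dt_eq.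
move: h1 h2; rewrite /Dl /s11 /s12 /s22.
have -> : b ^+ n = b ^+ k * b ^+ (n - k) by rewrite -exprD subnKC.
have -> : n%:R = k%:R + (n - k)%:R :> R by rewrite -natrD subnKC.
move=> h1 h2.
rewrite /pco /qco /Xq /kap /PP /rho.
have h3 := Dl_form _ _ h2.
congr (_ *: _ + _ *: _); field; rewrite ?h1 ?h3 ?a_neq0 ?omb_neq0 ?h_neq0 //.
Qed.


Lemma rho_form m (y : R) : m%:R * rho * (1 + y) = (m%:R * (1 - b ^+ 2) * (1 + y)) / b.
Proof. rewrite /rho; fld. Qed.

Lemma Krho m : 4 * (1 - b ^+ m) <= m%:R * rho * (1 + b ^+ m).
Proof.
have := @K_ineq' _ _ m b_gt0 b_lt1.
by rewrite rho_form ler_pdivlMr ?b_gt0 // mulrAC.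
Qed.

Lemma Krho_strict m : (0 < m)%N -> 4 * (1 - b ^+ m) < m%:R * rho * (1 + b ^+ m).
Proof.
move=> hm; have := @K_ineq _ _ m b_gt0 b_lt1 hm.
by rewrite rho_form ltr_pdivlMr ?b_gt0 // mulrAC.
Qed.

Lemma bpow_gt0 m : 0 < b ^+ m. Proof. by rewrite exprn_gt0 // b_gt0. Qed.
Lemma bpow_le1 m : b ^+ m <= 1.
Proof. by apply: exprn_ile1; [exact: ltW b_gt0 | exact: ltW b_lt1]. Qed.
Lemma bpow_lt1 m : (0 < m)%N -> b ^+ m < 1.
Proof. by move=> hm; rewrite exprn_ilt1 ?(ltW b_gt0) ?b_lt1 // -lt0n. Qed.

Lemma kap_gt0 : 0 < kap.
Proof. by rewrite /kap divr_gt0 ?mulr_gt0 ?a_gt0 // subr_gt0 b_lt1. Qed.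

Lemma part1 n (Dz : 'cV[R]_(d + d)) k : (1 <= n)%N -> (k <= n)%N ->
  vnorm (upos (traj gamma h n Dz k)) <= vnorm (upos Dz) + kap * (1 - b ^+ n) * vnorm (wvel Dz).
Proof.
move=> hn hk.
have hBn := bpow_lt1 n hn.
have h1 : 1 - b ^+ n != 0 by rewrite subr_eq0 eq_sym lt_eqF.
have hD : 0 < Dl n by rewrite /Dl subr_gt0 Krho_strict.
have h2 : Dl n != 0 by rewrite gt_eqF.
rewrite upos_traj //.
apply: le_trans (vnorm_triangle _ _) _; rewrite !vnorm_scale.
have ex : b ^+ n = b ^+ k * b ^+ (n - k) by rewrite -exprD subnKC.
have en : n%:R = k%:R + (n - k)%:R :> R by rewrite -natrD subnKC.
move: hD; rewrite /Dl ex en => hD.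
have x0 := bpow_gt0 k; have x1 := bpow_le1 k.
have y0 := bpow_gt0 (n - k); have y1 := bpow_le1 (n - k).
have Kx := Krho k; have Ky := Krho (n - k).
apply: lerD.
  rewrite -[X in _ <= X]mul1r; apply: ler_wpM2r; first exact: vnorm_ge0.
  rewrite /pco (mulrDl (k%:R) ((n - k)%:R) rho).
  apply: bound_p => //; by rewrite -mulrDl.
apply: ler_wpM2r; first exact: vnorm_ge0.
set x := b ^+ k in x0 x1 Kx hD *; set y := b ^+ (n - k) in y0 y1 Ky hD *.
have eqX : Xq k (n - k) = (n - k)%:R * rho * (1 - x) * (1 - x * y * y)
   - k%:R * rho * x * (1 - y) ^+ 2 - 2 * (1 - x * y) * (1 - x) * (1 - y).
  by rewrite /Xq -/x -/y; ring.
have B := @bound_q _ _ _ _ _ x0 x1 y0 y1 Ky Kx.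
have oxy : 0 < 1 - x * y by rewrite subr_gt0 -ex.
have Yp : 0 < (1 - x * y) * ((k%:R + (n - k)%:R) * rho * (1 + x * y) - 4 * (1 - x * y)).
  by rewrite mulr_gt0 // subr_gt0.
rewrite /qco -/x -/y -mulrA normrM (gtr0_norm kap_gt0) ler_pM2l ?kap_gt0 //.
rewrite normrM normfV (gtr0_norm Yp) ler_pdivrMr // eqX.
apply: (le_trans B); rewrite le_eqVlt; apply/orP; left; apply/eqP; ring.
Qed.


Lemma gha_le : gamma * h * a <= 1 - b.
Proof.
have s0 : 0 <= gamma * h / 2 by rewrite divr_ge0 // mulr_ge0 // ltW.
have H := @exp_ineq1 R _ s0.
have aE : a * expR (gamma * h / 2) = 1.
  rewrite mulrC /a (_ : - gamma * h / 2 = - (gamma * h / 2)); last by ring.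
  exact: expRxMexpNx_1.
set E := expR _ in H aE.
have a0 := a_gt0.
have := ler_wpM2r (ltW (exprn_gt0 2 a0)) H.
have -> : 2 * (gamma * h / 2) * E * a ^+ 2 = gamma * h * a * (a * E) by field.
have -> : (E * E - 1) * a ^+ 2 = (a * E) * (a * E) - a ^+ 2 by ring.
by rewrite aE !mulr1.
Qed.

Lemma kap_le : kap <= gamma^-1.
Proof.
rewrite /kap ler_pdivrMr ?subr_gt0 ?b_lt1 // ler_pdivlMl //.
by rewrite mulrA gha_le.
Qed.

Lemma Bn_ineq n : (2 + gamma * h * n%:R) * (1 - b ^+ n) <= 2 * (gamma * h * n%:R).
Proof.
set x := gamma * h * n%:R.
have x0 : 0 <= x by rewrite /x mulr_ge0 ?ler0n // mulr_ge0 // ltW.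
have H := @exp_ineq2 R _ x0.
have BE : b ^+ n * expR x = 1.
  rewrite -eb -expRM_natr /x (_ : - gamma * h * n%:R = - (gamma * h * n%:R)); last by ring.
  by rewrite mulrC expRxMexpNx_1.
have B0 : 0 <= b ^+ n := ltW (bpow_gt0 n).
have := ler_wpM2r B0 H.
have -> : (2 - x) * expR x * b ^+ n = (2 - x) * (b ^+ n * expR x) by ring.
rewrite BE mulr1 => H2.
nra.
Qed.

Lemma C_bound n : kap * (1 - b ^+ n) <= 2 * (h * n%:R / (2 + gamma * h * n%:R)).
Proof.
have B1 : 0 <= 1 - b ^+ n by rewrite subr_ge0 bpow_le1.
apply: (le_trans (ler_wpM2r B1 kap_le)).
have x0 : 0 < 2 + gamma * h * n%:R.
  by rewrite ltr_wpDr // mulr_ge0 ?ler0n // mulr_ge0 // ltW.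
have H1 : 1 - b ^+ n <= (2 * (gamma * h * n%:R)) / (2 + gamma * h * n%:R).
  by rewrite ler_pdivlMr // mulrC; exact: Bn_ineq.
have gi : 0 <= gamma^-1 by rewrite invr_ge0 ltW.
apply: (le_trans (ler_wpM2l gi H1)).
rewrite le_eqVlt; apply/orP; left; apply/eqP.
field; rewrite ?gt_eqF //.
Qed.


Lemma final (z zt : 'cV[R]_(d + d)) (n : nat) : (1 <= n)%N ->
  let Dz := zt - z in
  forall k : nat, (k <= n)%N ->
    vnorm (upos (traj gamma h n Dz k))
      <= vnorm (upos Dz)
         + h * expR (- gamma * h / 2) / (1 - expR (- gamma * h))
           * (1 - expR (- gamma * h * n%:R)) * vnorm (wvel Dz)
    /\
    vnorm (upos Dz)
         + h * expR (- gamma * h / 2) / (1 - expR (- gamma * h))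
           * (1 - expR (- gamma * h * n%:R)) * vnorm (wvel Dz)
      <= 2 * (1 + h * n%:R / (2 + gamma * h * n%:R)) * vnorm Dz.
Proof.
move=> hn Dz k hk.
rewrite expRM_natr !eb -/a -/kap.
split; first exact: part1.
have Cb := C_bound n.
have C0 : 0 <= kap * (1 - b ^+ n) by rewrite mulr_ge0 ?subr_ge0 ?bpow_le1 // ltW // kap_gt0.
have u1 := vnorm_usub Dz; have w1 := vnorm_dsub Dz.
have N0 := vnorm_ge0 Dz; have w0 := vnorm_ge0 (wvel Dz).
set C := kap * (1 - b ^+ n) in Cb C0 *.
set q := h * n%:R / _ in Cb *.
have q0 : 0 <= q.
  have : 0 <= gamma * h * n%:R by rewrite mulr_ge0 ?ler0n // mulr_ge0 // ltW.
  move=> g0; rewrite /q divr_ge0 //; first by rewrite mulr_ge0 ?ler0n // ltW.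
  lra.
nra.
Qed.

End Main.

Theorem mainTheorem9 (R : realType) (d : nat) (gamma h : R)
  (z zt : 'cV[R]_(d + d)) (n : nat) :
  0 < gamma -> 0 < h -> (1 <= n)%N ->
  let Dz := zt - z in
  forall k : nat, (k <= n)%N ->
    vnorm (upos (traj gamma h n Dz k))
      <= vnorm (upos Dz)
         + h * expR (- gamma * h / 2) / (1 - expR (- gamma * h))
           * (1 - expR (- gamma * h * n%:R)) * vnorm (wvel Dz)
    /\
    vnorm (upos Dz)
         + h * expR (- gamma * h / 2) / (1 - expR (- gamma * h))
           * (1 - expR (- gamma * h * n%:R)) * vnorm (wvel Dz)
      <= 2 * (1 + h * n%:R / (2 + gamma * h * n%:R)) * vnorm Dz.
Proof.
move=> hg hh hn; exact: (@final R d gamma h hg hh z zt n hn).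
Qed.
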